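(* Let $n\ge2$ be even and define $Q:\mathbb{F}_{2^n}\to\mathbb{F}_2$ by $$Q(x)=\sum_{i=1}^{n/2-1}Tr_1^n\!\left(x^{2^i+1}\right)+Tr_1^{n/2}\!\left(x^{2^{n/2}+1}\right).$$ Let $f:\mathbb{F}_{2^n}\to\mathbb{F}_2$. Then (1) if $f$ is bent then $f+Q$ is negabent; (2) if $f$ is negabent then $f+Q$ is bent.
   Context: $Tr_1^m(z)=z+z^2+\dots+z^{2^{m-1}}$ (for $m\mid n$, a map $\mathbb{F}_{2^m}\to\mathbb{F}_2$; note $x^{2^{n/2}+1}\in\mathbb{F}_{2^{n/2}}$); write $Tr=Tr_1^n$. Fix a self-dual basis $\{\alpha_i\}$ of $\mathbb{F}_{2^n}$ over $\mathbb{F}_2$ ($Tr(\alpha_i\alpha_j)=\delta_{ij}$), identify $\mathbb{F}_{2^n}$ with $\mathbb{F}_2^n$ via coordinates, and let $wt(x)$ be the number of nonzero coordinates. For $g:\mathbb{F}_{2^n}\to\mathbb{F}_2$: $g$ is bent if $\left|\sum_x(-1)^{g(x)+Tr(\mu x)}\right|=2^{n/2}$ for all $\mu$; $g$ is negabent if $\left|\sum_x(-1)^{g(x)+Tr(\mu x)}\mathrm{i}^{wt(x)}\right|=2^{n/2}$ for all $\mu$ ($\mathrm{i}=\sqrt{-1}$). *)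

(* Defs.v *)
From mathcomp Require Import all_boot all_order all_algebra all_field.
Set Implicit Arguments. Unset Strict Implicit. Unset Printing Implicit Defensive.
Import Order.TTheory GRing.Theory Num.Theory.
Local Open Scope ring_scope.

Section Defs.
Variables (n : nat) (F : finFieldType).

(* absolute trace Tr_1^n : F_{2^n} -> F_2 (value in the prime subfield of F) *)
Definition Tr (x : F) : F := \sum_(i < n) x ^+ (2 ^ i).
Definition Tr_half (y : F) : F := \sum_(i < n./2) y ^+ (2 ^ i).
(* an element of the prime field {0,1} of F read as a boolean *)
Definition tob (a : F) : bool := a != 0.

Definition Q (x : F) : bool :=
  tob (\sum_(1 <= i < n./2) Tr (x ^+ (2 ^ i + 1)) + Tr_half (x ^+ (2 ^ (n./2) + 1))).

Definition self_dual (alpha : 'I_n -> F) : Prop :=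
  forall i j : 'I_n, Tr (alpha i * alpha j) = (i == j)%:R.

(* coordinate i of x in the self-dual basis alpha is Tr(x alpha_i);
   wt x = number of nonzero coordinates *)
Definition wt (alpha : 'I_n -> F) (x : F) : nat :=
  #|[set i : 'I_n | tob (Tr (x * alpha i))]|.

Definition sgn (b : bool) : algC := (-1) ^+ b.

Definition bent (g : F -> bool) : Prop :=
  forall mu : F,
    `| \sum_(x : F) sgn (g x (+) tob (Tr (mu * x))) | = 2 ^+ (n./2).

Definition negabent (alpha : 'I_n -> F) (g : F -> bool) : Prop :=
  forall mu : F,
    `| \sum_(x : F) sgn (g x (+) tob (Tr (mu * x))) * 'i ^+ (wt alpha x) |
      = 2 ^+ (n./2).

End Defs.

(* Main.v *)
Require Import Defs.
From mathcomp Require Import all_boot all_order all_algebra all_field.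
From mathcomp Require Import zify ring.
Set Implicit Arguments. Unset Strict Implicit. Unset Printing Implicit Defensive.
Import Order.TTheory GRing.Theory Num.Theory.
Local Open Scope ring_scope.

Lemma sum2sq h a b : (a * a + b * b = 2 * 4 ^ h)%N -> a = (2 ^ h)%N.
Proof.
elim: h a b => [|h IH] a b.
  rewrite expn0; case: a => [|[|a]]; case: b => [|[|b]] //=; nia.
move=> E.
move: (odd_double_half a) (odd_double_half b) E.
case: (odd a); case: (odd b) => /= Ea Eb; rewrite -Ea -Eb => E.
- exfalso. rewrite expnS in E. set M := (4 ^ h)%N in E. set p := a./2 in E. set q := b./2 in E. lia.
- exfalso. rewrite expnS in E. set M := (4 ^ h)%N in E. set p := a./2 in E. set q := b./2 in E. lia.
- exfalso. rewrite expnS in E. set M := (4 ^ h)%N in E. set p := a./2 in E. set q := b./2 in E. lia.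
- have : (a./2 * a./2 + b./2 * b./2 = 2 * 4 ^ h)%N.
    rewrite expnS in E. set M := (4 ^ h)%N in E *. set p := a./2 in E *. set q := b./2 in E *. lia.
  by move/IH => ->; rewrite add0n expnS; lia.
Qed.

Lemma sgnN b : sgn (~~ b) = - sgn b.
Proof. by case: b; rewrite /sgn /= ?expr1 ?expr0 ?opprK. Qed.

Lemma sgnX a b : sgn (a (+) b) = sgn a * sgn b.
Proof. by case: a; case: b; rewrite /sgn /= ?expr1 ?expr0 ?mulr1 ?mul1r ?mulrNN ?mulr1. Qed.

Lemma sgn_real b : sgn b \is Num.real.
Proof. by rewrite /sgn rpredX // rpredN rpred1. Qed.

Lemma sgn_int b : sgn b \is a Num.int.
Proof. by rewrite /sgn rpredX // rpredN rpred1. Qed.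

Lemma sgn_i w : 2%:R * (sgn (odd 'C(w, 2)) * 'i ^+ w) = (1 + 'i) + (1 - 'i) * sgn (odd w).
Proof.
suff : forall w, (2%:R * (sgn (odd 'C(w, 2)) * 'i ^+ w) = (1 + 'i) + (1 - 'i) * sgn (odd w) :> algC)
  /\ (2%:R * (sgn (odd 'C(w.+1, 2)) * 'i ^+ w.+1) = (1 + 'i) + (1 - 'i) * sgn (odd w.+1) :> algC).
  by move=> /(_ w) [].
elim=> [|k [IH1 IH2]].
  by rewrite /sgn /= !expr0 !expr1 !mulr1 !mul1r; split; ring.
split => //.
have -> : 'C(k.+2, 2) = ('C(k, 2) + (k + k.+1))%N.
  rewrite !binS; rewrite -/(1.-1) ?bin0 ?(bin1 k); lia.
rewrite oddD (_ : odd (k + k.+1)%N = true); last by rewrite oddD /= addbN addbb.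
have -> : 'i ^+ k.+2 = - 'i ^+ k :> algC by rewrite !exprS mulrA -expr2 sqrCi mulN1r.
by rewrite addbT sgnN mulrNN IH1 /= negbK.
Qed.

Lemma norm2 (A B : algC) : A \is Num.real -> B \is Num.real ->
  `|(1 + 'i) * A + (1 - 'i) * B| ^+ 2 = 2%:R * (A ^+ 2 + B ^+ 2).
Proof.
move=> rA rB; rewrite normCK rmorphD !rmorphM /= rmorphD rmorphB /= rmorph1 conjCi.
rewrite !conj_Creal //.
transitivity ((1 - 'i ^+ 2) * (A ^+ 2 + B ^+ 2) + (2%:R + 2%:R * 'i ^+ 2) * A * B); first by ring.
by rewrite sqrCi; ring.
Qed.


Section Fld.
Variables (n : nat) (F : finFieldType).
Hypothesis cardF : #|F| = (2 ^ n)%N.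

Lemma char2 : 2%N \in [pchar F].
Proof. exact: card_finPcharP cardF _. Qed.

Lemma two0 : 2%:R = 0 :> F.
Proof. by have /andP[_ /eqP] := char2. Qed.

Lemma addxx (x : F) : x + x = 0.
Proof. by rewrite -mulr2n -mulr_natr two0 mulr0. Qed.

Lemma frobD k (x y : F) : (x + y) ^+ (2 ^ k) = x ^+ (2 ^ k) + y ^+ (2 ^ k).
Proof.
apply: exprDn_pchar; rewrite pnatX ?pnat_id //=. by rewrite pnatE // char2.
Qed.

Lemma frobn (x : F) : x ^+ (2 ^ n) = x.
Proof. by rewrite -cardF expf_card. Qed.

Lemma frob_sum k I (r : seq I) (P : pred I) (G : I -> F) :
  (\sum_(i <- r | P i) G i) ^+ (2 ^ k) = \sum_(i <- r | P i) G i ^+ (2 ^ k).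
Proof.
apply: (big_morph (fun x => x ^+ (2 ^ k))); first by move=> x y; apply: frobD.
by rewrite expr0n expn_eq0.
Qed.

Lemma frob_frob (x : F) k l : (x ^+ (2 ^ k)) ^+ (2 ^ l) = x ^+ (2 ^ (k + l)).
Proof. by rewrite -exprM -expnD. Qed.

Lemma TrD (x y : F) : Tr n (x + y) = Tr n x + Tr n y.
Proof. by rewrite /Tr -big_split /=; apply: eq_bigr => i _; apply: frobD. Qed.

Lemma Tr_sum I (r : seq I) (P : pred I) (G : I -> F) :
  Tr n (\sum_(i <- r | P i) G i) = \sum_(i <- r | P i) Tr n (G i).
Proof.
have T0 : Tr n (0:F) = 0 by rewrite /Tr big1 // => i _; rewrite expr0n expn_eq0.
elim: r => [|a r IH]; rewrite ?big_nil ?big_cons //.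
by case: (P a); rewrite ?TrD IH.
Qed.

Lemma Tr_frob1 (x : F) : Tr n (x ^+ 2) = Tr n x.
Proof.
have E : \sum_(i < n.+1) x ^+ (2 ^ i) = \sum_(i < n.+1) x ^+ (2 ^ i) by [].
move: E; rewrite {1}big_ord_recl big_ord_recr /= expn0 frobn expr1 [_ + x]addrC /Tr.
move=> /addrI <-.
by apply: eq_bigr => i _; rewrite /bump /= -exprM expnS.
Qed.

Lemma Tr_frob (x : F) k : Tr n (x ^+ (2 ^ k)) = Tr n x.
Proof.
elim: k => [|k IH]; first by rewrite expn0 expr1.
by rewrite expnS mulnC exprM Tr_frob1.
Qed.

Lemma Tr_sq (x : F) : Tr n x ^+ 2 = Tr n x.
Proof.
rewrite -{2}(Tr_frob1 x).
have -> : Tr n x ^+ 2 = Tr n x ^+ (2 ^ 1) by [].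
by rewrite /Tr frob_sum; apply: eq_bigr => i _; rewrite exprAC.
Qed.

Lemma sq01 (a : F) : a ^+ 2 = a -> a = 0 \/ a = 1.
Proof.
move=> E; have /eqP : a * (a - 1) = 0 by rewrite mulrBr mulr1 -expr2 E subrr.
by rewrite mulf_eq0 subr_eq0; case/orP=> /eqP ->; [left|right].
Qed.

Lemma tobD (a b : F) : a ^+ 2 = a -> b ^+ 2 = b -> tob (a + b) = tob a (+) tob b.
Proof.
move=> /sq01 [] -> /sq01 [] ->; rewrite /tob ?addr0 ?add0r ?eqxx ?oner_eq0 //.
by rewrite addxx eqxx.
Qed.

Lemma natr_odd k : k%:R = (odd k)%:R :> F.
Proof.
rewrite -{1}(odd_double_half k) natrD -muln2 natrM two0 mulr0 addr0.
by case: (odd k).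
Qed.

Lemma tob_nat k : tob (k%:R : F) = odd k.
Proof. by rewrite /tob natr_odd; case: (odd k); rewrite ?oner_eq0 ?eqxx. Qed.

Lemma nat_sq k : (k%:R : F) ^+ 2 = k%:R.
Proof. by rewrite natr_odd; case: (odd k); rewrite ?expr1n ?expr0n. Qed.

Lemma chiD (a b x : F) : tob (Tr n (a * x)) (+) tob (Tr n (b * x)) = tob (Tr n ((a + b) * x)).
Proof. by rewrite mulrDl TrD tobD // Tr_sq. Qed.


Lemma cyc m (z : F) : z ^+ (2 ^ m) = z ->
  \sum_(i < m) (z ^+ 2) ^+ (2 ^ i) = \sum_(i < m) z ^+ (2 ^ i).
Proof.
move=> Hz.
have E : \sum_(i < m.+1) z ^+ (2 ^ i) = \sum_(i < m.+1) z ^+ (2 ^ i) by [].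
move: E; rewrite {1}big_ord_recl big_ord_recr /= expn0 Hz expr1 [_ + z]addrC.
move=> /addrI <-.
by apply: eq_bigr => i _; rewrite /bump /= -exprM expnS.
Qed.

Lemma Tr_scal (c y : F) : c ^+ 2 = c -> Tr n (c * y) = c * Tr n y.
Proof.
case/sq01=> ->; first by rewrite !mul0r /Tr big1 // => i _; rewrite expr0n expn_eq0.
by rewrite !mul1r.
Qed.

Lemma oppF (x : F) : - x = x.
Proof. by apply/eqP; rewrite eq_sym -subr_eq0 opprK addxx. Qed.

Lemma sum_sq I (r : seq I) (P : pred I) (G : I -> F) :
  (\sum_(i <- r | P i) G i) ^+ 2 = \sum_(i <- r | P i) G i ^+ 2.
Proof. exact: (frob_sum 1). Qed.

Lemma sqD (x y : F) : (x + y) ^+ 2 = x ^+ 2 + y ^+ 2.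
Proof. exact: (frobD 1). Qed.

Lemma idx_split (D : nat -> F) h : (1 <= h)%N ->
  \sum_(i < h + h) D i = D 0%N + (\sum_(1 <= i < h) (D i + D (h + h - i)%N)) + D h.
Proof.
move=> h1.
rewrite big_split /= -addrA [_ + D h]addrC !addrA.
have -> : \sum_(1 <= i < h) D (h + h - i)%N = \sum_(h.+1 <= i < h + h) D i.
  rewrite big_nat_rev /= -[h.+1]/(1 + h)%N big_addn.
  have -> : (h + h - h = h)%N by rewrite addnK.
  by apply: eq_big_nat => i /andP[i1 ih]; congr D; rewrite addnC; lia.
rewrite -(big_mkord xpredT).
rewrite (@big_cat_nat _ _ _ 1 0 (h + h)) //; last by lia.
rewrite (@big_cat_nat _ _ _ h 1 (h + h)) //; last by lia.
rewrite (@big_cat_nat _ _ _ h.+1 h (h + h)) //; last by lia.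
rewrite !big_nat1 /=; ring.
Qed.


Hypothesis Hn : (n./2 + n./2)%N = n.
Hypothesis Hh1 : (1 <= n./2)%N.

Definition ee (x : F) := \sum_(1 <= i < n./2) Tr n (x ^+ (2 ^ i + 1))
   + Tr_half n (x ^+ (2 ^ (n./2) + 1)).

Lemma QE x : Q n x = tob (ee x).
Proof. by []. Qed.

Lemma Tr_halfD (x y : F) : Tr_half n (x + y) = Tr_half n x + Tr_half n y.
Proof. by rewrite /Tr_half -big_split /=; apply: eq_bigr => i _; apply: frobD. Qed.

Lemma powD i (x y : F) : (x + y) ^+ (2 ^ i + 1) =
  x ^+ (2 ^ i + 1) + y ^+ (2 ^ i + 1) + (x ^+ (2 ^ i) * y + y ^+ (2 ^ i) * x).
Proof. rewrite !exprD !expr1 frobD; ring. Qed.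

Lemma TrS_swap i (x y : F) : (i <= n)%N ->
  Tr n (y ^+ (2 ^ i) * x) = Tr n (x ^+ (2 ^ (n - i)) * y).
Proof.
move=> Hi; rewrite -(Tr_frob _ (n - i)) exprMn frob_frob subnKC // frobn mulrC.
by [].
Qed.

Lemma Tr_full (w : F) : Tr n w = Tr_half n w + Tr_half n (w ^+ (2 ^ (n./2))).
Proof.
rewrite /Tr /Tr_half; set h := n./2.
rewrite -(big_mkord xpredT (fun i => w ^+ (2 ^ i))) -{1}Hn big_mkord big_split_ord /=.
by congr (_ + _); apply: eq_bigr => i _; rewrite frob_frob.
Qed.

Lemma eD (x y : F) : ee (x + y) = ee x + ee y + Tr n x * Tr n y + Tr n (x * y).
Proof.
rewrite /ee.
pose D i := Tr n (x ^+ (2 ^ i) * y).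
have E1 : \sum_(1 <= i < n./2) Tr n ((x + y) ^+ (2 ^ i + 1)) =
   \sum_(1 <= i < n./2) Tr n (x ^+ (2 ^ i + 1)) + \sum_(1 <= i < n./2) Tr n (y ^+ (2 ^ i + 1))
   + \sum_(1 <= i < n./2) (D i + D (n./2 + n./2 - i)%N).
  rewrite -!big_split /=; apply: eq_big_nat => i /andP[_ ih].
  rewrite powD !TrD (@TrS_swap i x y) /D ?Hn //; rewrite -Hn; lia.
have E2 : Tr_half n ((x + y) ^+ (2 ^ n./2 + 1)) =
   Tr_half n (x ^+ (2 ^ n./2 + 1)) + Tr_half n (y ^+ (2 ^ n./2 + 1)) + D n./2.
  rewrite powD !Tr_halfD /D Tr_full.
  congr (_ + (_ + _)); rewrite exprMn frob_frob Hn frobn mulrC //.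
have E3 : \sum_(i < n./2 + n./2) D i = Tr n x * Tr n y.
  rewrite Hn /D -Tr_sum -mulr_suml Tr_scal //; exact: Tr_sq.
rewrite E1 E2 -E3 idx_split //.
have -> : D 0%N = Tr n (x * y) by rewrite /D expn0 expr1.
apply/eqP; rewrite -subr_eq0; apply/eqP.
transitivity (- (Tr n (x * y) + Tr n (x * y))); first by ring.
by rewrite addxx oppr0.
Qed.

Lemma Tr_half_sq (z : F) : z ^+ (2 ^ n./2) = z -> Tr_half n z ^+ 2 = Tr_half n z.
Proof.
move=> Hz; rewrite /Tr_half sum_sq -(cyc Hz).
by apply: eq_bigr => i _; rewrite exprAC.
Qed.

Lemma ee_sq (x : F) : ee x ^+ 2 = ee x.
Proof.
rewrite /ee sqD sum_sq Tr_half_sq; last first.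
  by rewrite -exprM mulnDl mul1n -expnD Hn exprD frobn exprD expr1 mulrC.
by congr (_ + _); apply: eq_bigr => i _; rewrite Tr_sq.
Qed.


Variable alpha : 'I_n -> F.
Hypothesis sd : self_dual alpha.

Definition sig (S : {set 'I_n}) : F := \sum_(i in S) alpha i.

Lemma Tr_sig_alpha S j : Tr n (sig S * alpha j) = (j \in S)%:R.
Proof.
rewrite /sig mulr_suml Tr_sum; under eq_bigr => i _ do rewrite sd.
case: (boolP (j \in S)) => Hj.
  rewrite (bigD1 j) //= eqxx big1 ?addr0 // => i /andP[_ /negbTE ->] //.
rewrite big1 // => i Hi; suff /negbTE -> : i != j by [].
by apply: contraNneq Hj => <-.
Qed.

Lemma sig_inj : injective sig.
Proof.
move=> S T E; apply/setP => j.
have := Tr_sig_alpha S j; rewrite E Tr_sig_alpha.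
by case: (j \in S); case: (j \in T) => //= /eqP; rewrite ?oner_eq0 // eq_sym oner_eq0.
Qed.

Lemma sig_onto x : exists S, x = sig S.
Proof.
have H : x \in codom sig.
  apply: inj_card_onto; first exact: sig_inj.
  by rewrite cardF -cardsT -powersetT card_powerset cardsT card_ord.
by case/codomP: H => S ->; exists S.
Qed.

Lemma wt_sig S : wt alpha (sig S) = #|S|.
Proof.
rewrite /wt; congr #|pred_of_set _|; apply/setP => j.
by rewrite inE Tr_sig_alpha tob_nat; case: (j \in S).
Qed.

Lemma Tr_alpha j : Tr n (alpha j) = 1.
Proof. by rewrite -Tr_frob1 expr2 sd eqxx. Qed.

Lemma Tr_sig S : Tr n (sig S) = #|S|%:R.
Proof.
rewrite /sig Tr_sum; under eq_bigr => i _ do rewrite Tr_alpha.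
by rewrite sumr_const.
Qed.

Lemma odd_wt x : odd (wt alpha x) = tob (Tr n (1 * x)).
Proof. by case: (sig_onto x) => S ->; rewrite mul1r wt_sig Tr_sig tob_nat. Qed.

Lemma ee0 : ee 0 = 0.
Proof.
rewrite /ee /Tr_half big1_seq ?add0r.
  by rewrite big1 // => i _; rewrite expr0n addn1 /= expr0n expn_eq0.
by move=> i _; rewrite expr0n addn1 /= /Tr big1 // => k _; rewrite expr0n expn_eq0.
Qed.

Lemma ee_sig S : ee (sig S) = 'C(#|S|, 2)%:R + \sum_(i in S) ee (alpha i).
Proof.
move Hk : #|S| => k; elim: k S Hk => [|k IH] S Hk.
  move/eqP: Hk; rewrite cards_eq0 => /eqP ->.
  by rewrite /sig !big_set0 ee0 bin0n add0r.
have : (0 < #|S|)%N by rewrite Hk.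
case/card_gt0P => j Hj.
have HS : sig S = alpha j + sig (S :\ j).
  by rewrite /sig (bigD1 j) //=; congr (_ + _); apply: eq_bigl => i; rewrite in_setD1 andbC.
have Hk' : #|S :\ j| = k by move: Hk; rewrite (cardsD1 j S) Hj add1n => -[].
rewrite HS eD IH // Tr_alpha Tr_sig Hk' [alpha j * _]mulrC Tr_sig_alpha setD11 mul1r.
rewrite [X in _ = _ + X](bigD1 j) //= (_ : 'C(k.+1, 2) = 'C(k, 2) + k)%N ?natrD; last by rewrite binS bin1.
have -> : \sum_(i in S | i != j) ee (alpha i) = \sum_(i in S :\ j) ee (alpha i).
  by apply: eq_bigl => i; rewrite in_setD1 andbC.
ring.
Qed.

Definition lam := sig [set i | tob (ee (alpha i))].

Lemma ee_alpha i : ee (alpha i) = (tob (ee (alpha i)))%:R.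
Proof. by case/sq01: (ee_sq (alpha i)) => ->; rewrite /tob ?eqxx ?oner_eq0. Qed.

Lemma Q_sig S : Q n (sig S) = odd 'C(#|S|, 2) (+) tob (Tr n (lam * sig S)).
Proof.
rewrite QE ee_sig.
have -> : \sum_(i in S) ee (alpha i) = Tr n (lam * sig S).
  rewrite [sig S]/sig mulr_sumr Tr_sum; apply: eq_bigr => i _.
  by rewrite Tr_sig_alpha inE -ee_alpha.
by rewrite tobD ?nat_sq ?Tr_sq // tob_nat.
Qed.

Lemma Q_wt x : Q n x = odd 'C(wt alpha x, 2) (+) tob (Tr n (lam * x)).
Proof. by case: (sig_onto x) => S ->; rewrite Q_sig wt_sig. Qed.


Definition Wt (h : F -> bool) (nu : F) : algC := \sum_(x : F) sgn (h x (+) tob (Tr n (nu * x))).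

Lemma Wt_real h nu : Wt h nu \is Num.real.
Proof. by apply: rpred_sum => x _; apply: sgn_real. Qed.

Lemma Wt_int h nu : Wt h nu \is a Num.int.
Proof. by apply: rpred_sum => x _; apply: sgn_int. Qed.

Lemma key (h : F -> bool) mu :
  2%:R * \sum_(x : F) sgn (h x (+) Q n x (+) tob (Tr n (mu * x))) * 'i ^+ (wt alpha x)
  = (1 + 'i) * Wt h (mu + lam) + (1 - 'i) * Wt h (mu + lam + 1).
Proof.
rewrite mulr_sumr /Wt !mulr_sumr -big_split /=; apply: eq_bigr => x _.
rewrite Q_wt.
have -> : h x (+) (odd 'C(wt alpha x, 2) (+) tob (Tr n (lam * x))) (+) tob (Tr n (mu * x))
   = (h x (+) tob (Tr n ((mu + lam) * x))) (+) odd 'C(wt alpha x, 2).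
  rewrite -chiD; by case: (h x); case: (odd _); case: (tob _); case: (tob _).
rewrite sgnX -mulrA mulrCA sgn_i odd_wt -(chiD (mu + lam) 1).
rewrite (_ : h x (+) (tob (Tr n ((mu + lam) * x)) (+) tob (Tr n (1 * x))) =
   (h x (+) tob (Tr n ((mu + lam) * x))) (+) tob (Tr n (1 * x))); last by rewrite addbA.
rewrite !sgnX; ring.
Qed.

End Fld.

Lemma normN (N A B : algC) : A \is Num.real -> B \is Num.real ->
  2%:R * N = (1 + 'i) * A + (1 - 'i) * B -> 2%:R * `|N| ^+ 2 = A ^+ 2 + B ^+ 2.
Proof.
move=> rA rB E; have := norm2 rA rB; rewrite -E normrM exprMn normr_nat => H.
apply: (@mulfI _ 2%:R); first by rewrite pnatr_eq0.
by rewrite -H; ring.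
Qed.

Theorem theorem7 (n : nat) (F : finFieldType) (alpha : 'I_n -> F) :
  (2 <= n)%N -> ~~ odd n -> #|F| = (2 ^ n)%N -> self_dual alpha ->
  forall f : F -> bool,
    (bent n f -> negabent alpha (fun x => f x (+) Q n x)) /\
    (negabent alpha f -> bent n (fun x => f x (+) Q n x)).
Proof.
move=> n2 ev cardF sd f.
have Hn : (n./2 + n./2)%N = n.
  by move: (odd_double_half n); rewrite (negbTE ev) addnn add0n.
have Hh1 : (1 <= n./2)%N by lia.
have K0 : 0 <= 2 ^+ n./2 :> algC by rewrite exprn_ge0 // ler0n.
split.
- move=> bf mu; rewrite /negabent.
  have E := key cardF Hn Hh1 sd f mu.
  have := normN (Wt_real _ _ _) (Wt_real _ _ _) E.
  rewrite -(real_normK (Wt_real _ _ _)) -[X in _ = _ + X](real_normK (Wt_real _ _ _)).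
  rewrite /Wt !bf => H.
  apply/eqP; rewrite -(eqrXn2 (_ : 0 < 2)%N) //.
  apply/eqP; apply: (@mulfI _ 2%:R); first by rewrite pnatr_eq0.
  by rewrite H; ring.
- move=> nf mu.
  have E := key cardF Hn Hh1 sd (fun x => f x (+) Q n x) (mu + lam alpha).
  rewrite -addrA (addxx cardF) addr0 in E.
  rewrite (eq_bigr (fun x => sgn (f x (+) tob (Tr n ((mu + lam alpha) * x))) * 'i ^+ (wt alpha x)))
    in E; last by move=> x _; rewrite -[f x (+) Q n x (+) Q n x]addbA addbb addbF.
  have := normN (Wt_real _ _ _) (Wt_real _ _ _) E.
  rewrite nf => H.
  have /natr_norm_int /natrP [p Hp] := Wt_int n (fun x => f x (+) Q n x) mu.
  have /natr_norm_int /natrP [q Hq] := Wt_int n (fun x => f x (+) Q n x) (mu + 1).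
  rewrite -(intr_normK (Wt_int _ _ _)) -[X in _ = _ + X](intr_normK (Wt_int _ _ _)) Hp Hq in H.
  rewrite /bent; rewrite /Wt in Hp; rewrite Hp.
  have Hpq : (p * p + q * q = 2 * 4 ^ n./2)%N.
    apply/eqP; rewrite -(eqr_nat algC) natrD !natrM natrX -H.
    by rewrite -exprM mulnC exprM -natrX.
  by rewrite (sum2sq Hpq) natrX.
Qed.
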